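(* For $t>0$ and $n,k\in\mathbb{Z}$ let $v=|n-k|/t$, $\phi_v(\theta)=2-2\cos\theta+v\theta$, and $$[K(t)]_{n,k}=\int_{|\theta+\frac{\pi}{2}|\le\frac{\pi}{6}}\mathrm{e}^{-\mathrm{i}t\phi_v(\theta)}\,d\theta .$$ Then for every $\sigma>1/2$ there is $C>0$ such that for all $t\ge1$ $$\sum_{n,k\in\mathbb{Z}}\big|[K(t)]_{n,k}\big|^2\frac{1}{(1+|n|)^{2\sigma}(1+|k|)^{2\sigma}}\le Ct^{-1}.$$ *)

(* Defs.v *)
From Stdlib Require Import Reals.
From Coquelicot Require Import Coquelicot.
Open Scope R_scope.

Definition phi (v theta : R) : R := 2 - 2 * cos theta + v * theta.

Definition vel (t : R) (n k : Z) : R := Rabs (IZR (n - k)) / t.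

Definition expmi (x : R) : C := (cos x, - sin x).

(* [K(t)]_{n,k} = \int_{|theta + pi/2| <= pi/6} e^{-i t phi_v(theta)} dtheta,
   the domain being the interval [-2pi/3, -pi/3]; complex-valued Riemann integral. *)
Definition Kent (t : R) (n k : Z) : C :=
  RInt (V := C_R_CompleteNormedModule)
    (fun theta => expmi (t * phi (vel t n k) theta)) (- (2 * PI / 3)) (- (PI / 3)).

Definition weight (sigma : R) (n k : Z) : R :=
  / (Rpower (1 + Rabs (IZR n)) (2 * sigma) * Rpower (1 + Rabs (IZR k)) (2 * sigma)).

Definition term (sigma t : R) (n k : Z) : R := (Cmod (Kent t n k)) ^ 2 * weight sigma n k.

(* partial sum over the box -N <= n, k <= N *)
Definition box_sum (sigma t : R) (N : nat) : R :=
  sum_f_R0 (fun i => sum_f_R0 (fun j =>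
     term sigma t (Z.of_nat i - Z.of_nat N)%Z (Z.of_nat j - Z.of_nat N)%Z) (2 * N)) (2 * N).

(* Main.v *)
Require Import Defs.
From Stdlib Require Import Reals.
From Coquelicot Require Import Coquelicot.
From Stdlib Require Import Lra Lia ZArith.
Open Scope R_scope.


Lemma is_RInt_sumf (g : nat -> R -> R) (v : nat -> R) a b n :
  (forall j, (j <= n)%nat -> is_RInt (g j) a b (v j)) ->
  is_RInt (fun x => sum_f_R0 (fun j => g j x) n) a b (sum_f_R0 v n).
Proof.
  induction n as [|n IH]; intros H.
  - simpl. apply H; lia.
  - simpl. apply (is_RInt_plus (V:=R_NormedModule)).
    + apply IH; intros; apply H; lia.
    + apply H; lia.
Qed.

Lemma ex_RInt_sumf (g : nat -> R -> R) a b n :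
  (forall j, (j <= n)%nat -> ex_RInt (g j) a b) ->
  ex_RInt (fun x => sum_f_R0 (fun j => g j x) n) a b.
Proof.
  intros H. exists (sum_f_R0 (fun j => RInt (g j) a b) n).
  apply is_RInt_sumf. intros j Hj. apply (RInt_correct (V:=R_CompleteNormedModule)). auto.
Qed.

Lemma sum_prod (A B : nat -> R) n m :
  sum_f_R0 A n * sum_f_R0 B m = sum_f_R0 (fun j => sum_f_R0 (fun l => A j * B l) m) n.
Proof.
  induction n as [|n IH]; simpl.
  - rewrite scal_sum. apply sum_eq. intros; ring.
  - rewrite Rmult_plus_distr_r, IH. f_equal. rewrite scal_sum. apply sum_eq. intros; ring.
Qed.

Lemma sum_exch (A : nat -> nat -> R) n m :
  sum_f_R0 (fun i => sum_f_R0 (fun j => A i j) m) n =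
  sum_f_R0 (fun j => sum_f_R0 (fun i => A i j) n) m.
Proof.
  induction n as [|n IH]; simpl.
  - reflexivity.
  - rewrite IH, <- sum_plus. reflexivity.
Qed.

Lemma sum_delta (c : R) j M : (j <= M)%nat ->
  sum_f_R0 (fun l => if Nat.eq_dec j l then c else 0) M = c.
Proof.
  assert (Z : forall K, (K < j)%nat -> sum_f_R0 (fun l => if Nat.eq_dec j l then c else 0) K = 0).
  { induction K; intros HK; simpl.
    - destruct (Nat.eq_dec j 0); [lia|reflexivity].
    - rewrite IHK by lia. destruct (Nat.eq_dec j (S K)); [lia|ring]. }
  induction M; intros HM; simpl.
  - destruct (Nat.eq_dec j 0); [reflexivity|lia].
  - destruct (Nat.eq_dec j (S M)).
    + subst. rewrite Z by lia. ring.
    + rewrite IHM by lia. ring.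
Qed.

Lemma sum_le_gen (A B : nat -> R) n : (forall j, (j <= n)%nat -> A j <= B j) ->
  sum_f_R0 A n <= sum_f_R0 B n.
Proof.
  induction n; intros H; simpl.
  - apply H; lia.
  - apply Rplus_le_compat; [apply IHn; intros; apply H; lia | apply H; lia].
Qed.

Lemma sum_nonneg (A : nat -> R) n : (forall j, (j <= n)%nat -> 0 <= A j) -> 0 <= sum_f_R0 A n.
Proof.
  induction n; intros H; simpl.
  - apply H; lia.
  - apply Rplus_le_le_0_compat; [apply IHn; intros; apply H; lia | apply H; lia].
Qed.

Lemma sum_telesc (D : nat -> R) n : sum_f_R0 (fun i => D (S i) - D i) n = D (S n) - D O.
Proof. induction n; simpl. ring. rewrite IHn. ring. Qed.

Definition a0 := -(2*PI/3).
Definition b0 := -(PI/3).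
Definition chi t th := t*(2-2*cos th).
Definition Pc t f := RInt (fun th => cos (chi t th + f*th)) a0 b0.
Definition Ps t f := RInt (fun th => sin (chi t th + f*th)) a0 b0.
Definition Gf t f := Pc t f ^2 + Ps t f ^2.

Ltac exri := apply (ex_RInt_continuous (V:=R_CompleteNormedModule)); intros ? _;
  apply (ex_derive_continuous (V:=R_NormedModule)); unfold chi; auto_derive; auto.

Lemma Rpow_mult_distr_r_helper x : x ^ 2 = x * x.
Proof. ring. Qed.

Lemma Gf_nonneg t f : 0 <= Gf t f.
Proof. unfold Gf. nra. Qed.

Lemma bessel t (F : nat -> Z) M :
  (forall j l, (j<=M)%nat -> (l<=M)%nat -> j <> l -> F j <> F l) ->
  sum_f_R0 (fun j => Gf t (IZR (F j))) M <= 2*PI*(PI/3).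
Proof.
  intros Hinj.
  set (f := fun j => IZR (F j)).
  set (P := fun j => Pc t (f j)). set (Q := fun j => Ps t (f j)).
  set (X := sum_f_R0 (fun j => P j ^2 + Q j ^2) M).
  change (X <= 2*PI*(PI/3)).
  set (U := fun th => sum_f_R0 (fun j => P j * cos (f j * th) + Q j * sin (f j * th)) M).
  set (V := fun th => sum_f_R0 (fun j => Q j * cos (f j * th) - P j * sin (f j * th)) M).
  set (T := fun j l th => (P j*P l + Q j*Q l)*cos((f j - f l)*th) + (Q j*P l - P j*Q l)*sin((f j - f l)*th)).
  set (W := fun th => U th ^2 + V th ^2).
  assert (C1 : forall th, W th = sum_f_R0 (fun j => sum_f_R0 (fun l => T j l th) M) M).
  { intros th. unfold W, U, V. rewrite !Rpow_mult_distr_r_helper.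
    rewrite !sum_prod, <- sum_plus. apply sum_eq. intros j _.
    rewrite <- sum_plus. apply sum_eq. intros l _. unfold T.
    replace ((f j - f l)*th) with (f j*th - f l*th) by ring. rewrite cos_minus, sin_minus. ring. }
  assert (C2 : forall a b, ex_RInt W a b).
  { intros a b. apply (ex_RInt_ext (fun th => sum_f_R0 (fun j => sum_f_R0 (fun l => T j l th) M) M)).
    { intros; rewrite C1; reflexivity. }
    apply ex_RInt_sumf; intros j _; apply ex_RInt_sumf; intros l _; unfold T; exri. }
  assert (PIpos := PI_RGT_0).
  assert (C3 : is_RInt W (-PI) PI (2*PI*X)).
  { apply (is_RInt_ext (fun th => sum_f_R0 (fun j => sum_f_R0 (fun l => T j l th) M) M)).
    { intros; rewrite C1; reflexivity. }
    replace (2*PI*X) with (sum_f_R0 (fun j => sum_f_R0 (fun l =>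
        if Nat.eq_dec j l then 2*PI*(P j^2+Q j^2) else 0) M) M).
    2:{ unfold X. rewrite scal_sum. apply sum_eq. intros j Hj. rewrite sum_delta by lia. ring. }
    apply is_RInt_sumf; intros j Hj; apply is_RInt_sumf; intros l Hl.
    destruct (Nat.eq_dec j l) as [E|E].
    - subst l. apply (is_RInt_ext (fun _ => P j^2+Q j^2)).
      { intros; unfold T. replace (f j - f j) with 0 by ring. rewrite Rmult_0_l, cos_0, sin_0. simpl; ring. }
      replace (2*PI*(P j^2+Q j^2)) with (scal (PI - -PI) (P j^2+Q j^2)).
      2:{ unfold scal; simpl; unfold mult; simpl; ring. }
      apply (is_RInt_const (V:=R_NormedModule)).
    - set (D := f j - f l).
      assert (HD : D = IZR (F j - F l)) by (unfold D, f; rewrite minus_IZR; reflexivity).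
      assert (HD0 : D <> 0).
      { rewrite HD. apply not_0_IZR. intro H. apply (Hinj j l Hj Hl E). lia. }
      set (A := fun th => (P j*P l + Q j*Q l)*sin(D*th)/D - (Q j*P l - P j*Q l)*cos(D*th)/D).
      replace 0 with (minus (A PI) (A (-PI))).
      2:{ unfold A, minus, plus, opp; simpl.
          assert (S1 : sin (D*PI) = 0) by (apply sin_eq_0_1; exists (F j - F l)%Z; rewrite HD; ring).
          replace (D * - PI) with (-(D*PI)) by ring. rewrite sin_neg, cos_neg, S1. field. auto. }
      apply (is_RInt_derive A).
      + intros x _. unfold A, T. fold D. auto_derive; auto. field. auto.
      + intros x _. apply (ex_derive_continuous (V:=R_NormedModule)). unfold T. auto_derive. auto. }
  set (S := fun th => sum_f_R0 (fun j => P j * cos (chi t th + f j*th) + Q j * sin (chi t th + f j*th)) M).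
  assert (C4 : is_RInt S a0 b0 X).
  { apply is_RInt_sumf. intros j _.
    assert (HP: is_RInt (fun th => cos (chi t th + f j*th)) a0 b0 (P j)).
    { apply (RInt_correct (V:=R_CompleteNormedModule)). exri. }
    assert (HQ: is_RInt (fun th => sin (chi t th + f j*th)) a0 b0 (Q j)).
    { apply (RInt_correct (V:=R_CompleteNormedModule)). exri. }
    replace (P j ^2 + Q j ^2) with (plus (scal (P j) (P j)) (scal (Q j) (Q j))).
    2:{ unfold plus, scal; simpl; unfold mult; simpl; ring. }
    apply (is_RInt_plus (V:=R_NormedModule)); apply (is_RInt_scal (V:=R_NormedModule)); auto. }
  assert (C5 : forall th, S th <= PI + W th / (4*PI)).
  { intros th.
    assert (E: S th = cos (chi t th) * U th + sin (chi t th) * V th).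
    { unfold S, U, V. rewrite !scal_sum, <- sum_plus. apply sum_eq; intros.
      rewrite cos_plus, sin_plus. ring. }
    assert (H1 := sin2_cos2 (chi t th)). unfold Rsqr in H1.
    assert (H2 : S th ^2 <= W th).
    { unfold W. rewrite E. assert (Hid : (cos (chi t th) * U th + sin (chi t th) * V th) ^ 2 + (cos (chi t th) * V th - sin (chi t th) * U th)^2 = (sin (chi t th) * sin (chi t th) + cos (chi t th) * cos (chi t th)) * (U th ^ 2 + V th ^ 2)) by ring. rewrite H1 in Hid. assert (0 <= (cos (chi t th) * V th - sin (chi t th) * U th)^2) by apply pow2_ge_0. lra. }
    assert (H3 : S th <= PI + S th ^2 / (4*PI)).
    { assert (Hq : S th ^2 / (4*PI) - S th + PI = (S th - 2*PI)^2 / (4*PI)) by (field; lra).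
      assert (0 <= (S th - 2*PI)^2 / (4*PI)) by (apply Rdiv_le_0_compat; [apply pow2_ge_0|lra]). lra. }
    assert (S th ^2 / (4*PI) <= W th /(4*PI)).
    { unfold Rdiv. apply Rmult_le_compat_r; [apply Rlt_le, Rinv_0_lt_compat; lra| auto]. }
    lra. }
  assert (Hab : -PI <= a0 /\ a0 <= b0 /\ b0 <= PI) by (unfold a0, b0; lra).
  assert (C6 : RInt W a0 b0 <= 2*PI*X).
  { rewrite <- (is_RInt_unique W _ _ _ C3).
    rewrite <- (RInt_Chasles (V:=R_CompleteNormedModule) W (-PI) a0 PI) by auto.
    rewrite <- (RInt_Chasles (V:=R_CompleteNormedModule) W a0 b0 PI) by auto.
    unfold plus; simpl.
    assert (0 <= RInt W (-PI) a0) by (apply RInt_ge_0; [lra|auto|intros; unfold W; nra]).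
    assert (0 <= RInt W b0 PI) by (apply RInt_ge_0; [lra|auto|intros; unfold W; nra]).
    lra. }
  assert (C7 : is_RInt (fun th => PI + W th / (4*PI)) a0 b0 (PI*(b0-a0) + RInt W a0 b0 / (4*PI))).
  { apply (is_RInt_ext (fun th => plus (PI) (scal (/(4*PI)) (W th)))).
    { intros; unfold plus, scal; simpl; unfold mult; simpl. unfold Rdiv; ring. }
    replace (PI*(b0-a0) + RInt W a0 b0 / (4*PI)) with
      (plus (scal (b0-a0) PI) (scal (/(4*PI)) (RInt W a0 b0))).
    2:{ unfold plus, scal; simpl; unfold mult; simpl. unfold Rdiv; ring. }
    apply (is_RInt_plus (V:=R_NormedModule)). apply (is_RInt_const (V:=R_NormedModule)).
    apply (is_RInt_scal (V:=R_NormedModule)). apply (RInt_correct (V:=R_CompleteNormedModule)). auto. }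
  assert (C8 : X <= PI*(b0-a0) + RInt W a0 b0 / (4*PI)).
  { rewrite <- (is_RInt_unique _ _ _ _ C4), <- (is_RInt_unique _ _ _ _ C7).
    apply RInt_le; [lra| eexists; eauto | eexists; eauto | intros; apply C5]. }
  assert (RInt W a0 b0 / (4*PI) <= X/2).
  { replace (X/2) with (2*PI*X/(4*PI)) by (field; lra). unfold Rdiv. apply Rmult_le_compat_r; [apply Rlt_le, Rinv_0_lt_compat; lra| auto]. }
  assert (Hpp : PI*(b0-a0) = PI*PI/3) by (unfold a0, b0; field). rewrite Hpp in C8. replace (2*PI*(PI/3)) with (2*(PI*PI/3)) by field. lra.
Qed.

Ltac nzt := first [lra | (repeat rewrite Rmult_1_r); apply Rmult_integral_contrapositive_currified; lra].

Lemma sqrt3_ge : 8/5 <= sqrt 3.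
Proof.
  destruct (Rle_or_lt (8/5) (sqrt 3)) as [H|H]; auto.
  assert (H0 := sqrt_sqrt 3 ltac:(lra)). assert (0 <= sqrt 3) by apply sqrt_pos. nra.
Qed.

Lemma sin_I th : a0 <= th <= b0 -> sin th <= -4/5.
Proof.
  unfold a0, b0. intros [H1 H2]. assert (PIpos := PI_RGT_0).
  rewrite <- (Ropp_involutive th), sin_neg. set (x := - th).
  assert (S3 := sqrt3_ge). assert (Hs : sin (PI/3) = sqrt 3 / 2) by apply sin_PI3.
  assert (sin (PI/3) <= sin x).
  { destruct (Rle_or_lt x (PI/2)).
    - apply sin_incr_1; unfold x in *; lra.
    - rewrite <- (sin_PI_x x). apply sin_incr_1; unfold x in *; lra. }
  lra.
Qed.

Lemma div_bound x d c : 0 < c -> Rabs x <= 1 -> d <= -c -> Rabs (x / d) <= / c.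
Proof.
  intros Hc Hx Hd. rewrite Rabs_div by lra. rewrite (Rabs_left d) by lra.
  unfold Rdiv. apply Rle_trans with (1 * / - d).
  - apply Rmult_le_compat_r; [apply Rlt_le, Rinv_0_lt_compat; lra | auto].
  - rewrite Rmult_1_l. apply Rinv_le_contravar; lra.
Qed.

Lemma div2_bound x k d c : 0 < c -> 0 <= k -> Rabs x <= 1 -> d <= -c -> Rabs (x * k / d^2) <= k / c^2.
Proof.
  intros Hc Hk Hx Hd. assert (Hd2 : c^2 <= d^2) by nra.
  unfold Rdiv. rewrite Rabs_mult, Rabs_mult, (Rabs_pos_eq k) by auto.
  rewrite (Rabs_pos_eq (/ d^2)) by (apply Rlt_le, Rinv_0_lt_compat; nra).
  apply Rle_trans with (1 * k * / d^2).
  - apply Rmult_le_compat_r; [apply Rlt_le, Rinv_0_lt_compat; nra|].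
    apply Rmult_le_compat_r; auto.
  - rewrite Rmult_1_l. apply Rmult_le_compat_l; auto. apply Rinv_le_contravar; nra.
Qed.

Lemma fd_bound t f : 1 <= t -> 0 <= f <= t -> Rabs (Pc t f) <= 12/t /\ Rabs (Ps t f) <= 12/t.
Proof.
  intros Ht Hf. assert (PIpos := PI_RGT_0). assert (PI4 := PI_4).
  set (d := fun th => 2*t*sin th + f).
  assert (Hd : forall th, a0 <= th <= b0 -> d th <= -(3*t/5)).
  { intros th Hth. unfold d. assert (H := sin_I th Hth). nra. }
  assert (Hab : a0 <= b0) by (unfold a0, b0; lra).
  assert (Hc : 0 < 3*t/5) by lra.
  assert (Hb1 : / (3*t/5) = 5/3 * / t) by (field; lra).
  assert (Hb2 : 2*t / (3*t/5)^2 = 50/9 * /t) by (field; lra).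
  assert (Hlen : b0 - a0 = PI/3) by (unfold a0, b0; field).
  split.
  - set (h := fun th => sin (chi t th + f*th) * (2*t) * cos th / (d th)^2).
    set (g := fun th => sin (chi t th + f*th) / d th).
    assert (Hder : is_RInt (fun th => cos (chi t th + f*th) - h th) a0 b0 (g b0 - g a0)).
    { replace (g b0 - g a0) with (minus (g b0) (g a0)) by reflexivity.
      apply (is_RInt_derive (V:=R_CompleteNormedModule) g).
      + intros x Hx. rewrite Rmin_left, Rmax_right in Hx by auto.
        assert (Hx0 := Hd x Hx). unfold g, h, d, chi in *. auto_derive.
        * lra.
        * replace (t * (2 + - (2 * cos x)) + f * x) with (t * (2 - 2 * cos x) + f * x) by ring. field. lra.
      + intros x Hx. rewrite Rmin_left, Rmax_right in Hx by auto.
        assert (Hx0 := Hd x Hx). apply (ex_derive_continuous (V:=R_NormedModule)).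
        unfold h, d, chi in *. auto_derive; nzt. }
    assert (Hh : ex_RInt h a0 b0).
    { apply (ex_RInt_continuous (V:=R_CompleteNormedModule)). intros x Hx.
      rewrite Rmin_left, Rmax_right in Hx by auto.
      assert (Hx0 := Hd x Hx). apply (ex_derive_continuous (V:=R_NormedModule)).
      unfold h, d, chi in *. auto_derive; nzt. }
    assert (E : Pc t f = (g b0 - g a0) + RInt h a0 b0).
    { unfold Pc. apply is_RInt_unique.
      apply (is_RInt_ext (fun th => plus (cos (chi t th + f*th) - h th) (h th))).
      { intros; unfold plus; simpl; ring. }
      apply (is_RInt_plus (V:=R_NormedModule)); auto.
      apply (RInt_correct (V:=R_CompleteNormedModule)); auto. }
    assert (G1 : forall th, a0 <= th <= b0 -> Rabs (g th) <= 5/3 * /t).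
    { intros th Hth. rewrite <- Hb1. apply div_bound; auto. apply Rabs_le, SIN_bound. }
    assert (G2 : Rabs (RInt h a0 b0) <= (b0 - a0) * (50/9 * /t)).
    { apply abs_RInt_le_const; auto. intros th Hth. rewrite <- Hb2. unfold h.
      replace (sin (chi t th + f * th) * (2 * t) * cos th) with
        ((sin (chi t th + f * th) * cos th) * (2*t)) by ring.
      apply div2_bound; auto; try lra.
      rewrite Rabs_mult. assert (A1 := SIN_bound (chi t th + f*th)). assert (A2 := COS_bound th).
      assert (Rabs (sin (chi t th + f * th)) <= 1) by (apply Rabs_le; lra).
      assert (Rabs (cos th) <= 1) by (apply Rabs_le; lra).
      assert (0 <= Rabs (cos th)) by apply Rabs_pos. nra. }
    rewrite E. assert (Ga := G1 a0 ltac:(lra)). assert (Gb := G1 b0 ltac:(lra)).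
    rewrite Hlen in G2. assert (0 < /t) by (apply Rinv_0_lt_compat; lra).
    apply Rle_trans with (Rabs (g b0) + Rabs (g a0) + Rabs (RInt h a0 b0)).
    { eapply Rle_trans; [apply Rabs_triang|]. apply Rplus_le_compat_r.
      unfold Rminus. eapply Rle_trans; [apply Rabs_triang|]. rewrite Rabs_Ropp. lra. }
    unfold Rdiv. nra.
  - set (h := fun th => cos (chi t th + f*th) * (2*t) * cos th / (d th)^2).
    set (g := fun th => - cos (chi t th + f*th) / d th).
    assert (Hder : is_RInt (fun th => sin (chi t th + f*th) + h th) a0 b0 (g b0 - g a0)).
    { replace (g b0 - g a0) with (minus (g b0) (g a0)) by reflexivity.
      apply (is_RInt_derive (V:=R_CompleteNormedModule) g).
      + intros x Hx. rewrite Rmin_left, Rmax_right in Hx by auto.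
        assert (Hx0 := Hd x Hx). unfold g, h, d, chi in *. auto_derive.
        * lra.
        * replace (t * (2 + - (2 * cos x)) + f * x) with (t * (2 - 2 * cos x) + f * x) by ring. field. lra.
      + intros x Hx. rewrite Rmin_left, Rmax_right in Hx by auto.
        assert (Hx0 := Hd x Hx). apply (ex_derive_continuous (V:=R_NormedModule)).
        unfold h, d, chi in *. auto_derive; nzt. }
    assert (Hh : ex_RInt h a0 b0).
    { apply (ex_RInt_continuous (V:=R_CompleteNormedModule)). intros x Hx.
      rewrite Rmin_left, Rmax_right in Hx by auto.
      assert (Hx0 := Hd x Hx). apply (ex_derive_continuous (V:=R_NormedModule)).
      unfold h, d, chi in *. auto_derive; nzt. }
    assert (E : Ps t f = (g b0 - g a0) + opp (RInt h a0 b0)).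
    { unfold Ps. apply is_RInt_unique.
      apply (is_RInt_ext (fun th => plus (sin (chi t th + f*th) + h th) (opp (h th)))).
      { intros; unfold plus, opp; simpl; ring. }
      apply (is_RInt_plus (V:=R_NormedModule)); auto.
      apply (is_RInt_opp (V:=R_NormedModule)).
      apply (RInt_correct (V:=R_CompleteNormedModule)); auto. }
    assert (G1 : forall th, a0 <= th <= b0 -> Rabs (g th) <= 5/3 * /t).
    { intros th Hth. rewrite <- Hb1. apply div_bound; auto.
      rewrite Rabs_Ropp. apply Rabs_le, COS_bound. }
    assert (G2 : Rabs (RInt h a0 b0) <= (b0 - a0) * (50/9 * /t)).
    { apply abs_RInt_le_const; auto. intros th Hth. rewrite <- Hb2. unfold h.
      replace (cos (chi t th + f * th) * (2 * t) * cos th) with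
        ((cos (chi t th + f * th) * cos th) * (2*t)) by ring.
      apply div2_bound; auto; try lra.
      rewrite Rabs_mult. assert (A1 := COS_bound (chi t th + f*th)). assert (A2 := COS_bound th).
      assert (Rabs (cos (chi t th + f * th)) <= 1) by (apply Rabs_le; lra).
      assert (Rabs (cos th) <= 1) by (apply Rabs_le; lra).
      assert (0 <= Rabs (cos th)) by apply Rabs_pos. nra. }
    rewrite E. assert (Ga := G1 a0 ltac:(lra)). assert (Gb := G1 b0 ltac:(lra)).
    rewrite Hlen in G2. assert (0 < /t) by (apply Rinv_0_lt_compat; lra).
    unfold opp; simpl.
    apply Rle_trans with (Rabs (g b0) + Rabs (g a0) + Rabs (RInt h a0 b0)).
    { eapply Rle_trans; [apply Rabs_triang|]. rewrite Rabs_Ropp. apply Rplus_le_compat_r.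
      unfold Rminus. eapply Rle_trans; [apply Rabs_triang|]. rewrite Rabs_Ropp. lra. }
    unfold Rdiv. nra.
Qed.

Lemma fd_G t f : 1 <= t -> 0 <= f <= t -> Gf t f <= 288 / t^2.
Proof.
  intros Ht Hf. destruct (fd_bound t f Ht Hf) as [H1 H2]. unfold Gf.
  rewrite <- (pow2_abs (Pc t f)), <- (pow2_abs (Ps t f)).
  assert (0 <= Rabs (Pc t f)) by apply Rabs_pos. assert (0 <= Rabs (Ps t f)) by apply Rabs_pos.
  replace (288 / t^2) with (2 * (12/t)^2) by (field; lra).
  assert (0 <= 12 / t) by (apply Rdiv_le_0_compat; lra). nra.
Qed.

Lemma key_ineq r p : 0 < r -> 1 <= p ->
  r * Rpower (p+1) (-(r+1)) <= Rpower p (-r) - Rpower (p+1) (-r).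
Proof.
  intros Hr Hp. unfold Rpower.
  set (L1 := ln p). set (L2 := ln (p+1)).
  assert (E1 : exp L1 = p) by (apply exp_ln; lra).
  assert (E2 : exp L2 = p+1) by (apply exp_ln; lra).
  assert (H1 : 1 + (L1 - L2) <= p / (p+1)).
  { replace (p/(p+1)) with (exp (L1 - L2)).
    - apply exp_ineq1_le.
    - unfold Rminus. rewrite exp_plus, exp_Ropp, E1, E2. reflexivity. }
  assert (H2 : L2 - L1 >= 1/(p+1)).
  { assert (p/(p+1) = 1 - 1/(p+1)) by (field; lra). lra. }
  replace (-(r+1)*L2) with (-r*L2 + -L2) by ring.
  rewrite exp_plus, exp_Ropp, E2.
  replace (-r*L1) with (-r*L2 + r*(L2-L1)) by ring.
  rewrite exp_plus.
  assert (H3 : 1 + r*(L2-L1) <= exp (r*(L2-L1))) by apply exp_ineq1_le.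
  assert (H4 : 0 < exp (-r*L2)) by apply exp_pos.
  assert (H5 : r * / (p+1) <= r*(L2-L1)).
  { apply Rmult_le_compat_l; lra. }
  nra.
Qed.

Lemma Rpower_ge1 x y : 1 <= x -> 0 <= y -> 1 <= Rpower x y.
Proof. intros. rewrite <- (Rpower_O x) by lra. apply Rle_Rpower; lra. Qed.

Lemma Rpower_ge_x x y : 1 <= x -> 1 <= y -> x <= Rpower x y.
Proof. intros. rewrite <- (Rpower_1 x) at 1 by lra. apply Rle_Rpower; lra. Qed.


Definition Wz s (z : Z) := / Rpower (1 + Rabs (IZR z)) s.
Definition Dz r (z : Z) := if Z_lt_le_dec z 0 then Rpower (1 - IZR z) (-r) - 1
                           else 1 - Rpower (1 + IZR z) (-r).

Lemma Rpower_neg_bounds x r : 1 <= x -> 0 <= r -> 0 < Rpower x (-r) <= 1.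
Proof.
  intros. rewrite Rpower_Ropp. assert (H1 := Rpower_ge1 x r H H0). split.
  - apply Rinv_0_lt_compat; lra.
  - rewrite <- Rinv_1. apply Rinv_le_contravar; lra.
Qed.

Lemma Dz_bound r z : 0 <= r -> -1 <= Dz r z <= 1.
Proof.
  intros Hr. unfold Dz. destruct (Z_lt_le_dec z 0) as [H|H].
  - apply IZR_lt in H. assert (Hb := Rpower_neg_bounds (1 - IZR z) r ltac:(lra) Hr). lra.
  - apply IZR_le in H. assert (Hb := Rpower_neg_bounds (1 + IZR z) r ltac:(lra) Hr). lra.
Qed.

Lemma Rpower_1_l y : Rpower 1 y = 1.
Proof. unfold Rpower. rewrite ln_1, Rmult_0_r, exp_0. reflexivity. Qed.

Lemma W_tel s z : 1 < s -> Wz s z <= (Rpower 2 s / (s-1)) * (Dz (s-1) (z+1) - Dz (s-1) z).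
Proof.
  intros Hs. set (r := s - 1). assert (Hr : 0 < r) by (unfold r; lra).
  assert (H2s : 1 <= Rpower 2 s) by (apply Rpower_ge1; lra).
  unfold Wz, Dz. rewrite plus_IZR.
  assert (Hrs : -(r+1) = -s) by (unfold r; ring).
  destruct (Z_lt_le_dec z 0) as [Hz|Hz].
  - assert (Hz1 : IZR z <= -1) by (apply IZR_le; lia).
    assert (ED : (if Z_lt_le_dec (z+1) 0 then Rpower (1 - (IZR z + 1)) (-r) - 1
                  else 1 - Rpower (1 + (IZR z + 1)) (-r)) = Rpower (- IZR z) (-r) - 1).
    { destruct (Z_lt_le_dec (z+1) 0) as [H|H].
      - f_equal. f_equal. ring.
      - assert (IZR z = -1) by (apply IZR_le in H; rewrite plus_IZR in H; lra).
        rewrite H0. replace (1 + (-1+1)) with 1 by ring. replace (- -1) with 1 by ring.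
        rewrite !Rpower_1_l. ring. }
    rewrite ED.
    assert (K := key_ineq r (- IZR z) Hr ltac:(lra)).
    replace (- IZR z + 1) with (1 - IZR z) in K by ring. rewrite Hrs, Rpower_Ropp in K.
    rewrite Rabs_left by lra. replace (1 + - IZR z) with (1 - IZR z) by ring.
    assert (Hd0 : 0 <= Rpower (- IZR z) (- r) - 1 - (Rpower (1 - IZR z) (- r) - 1)).
    { assert (0 <= / Rpower (1 - IZR z) s).
      { apply Rlt_le, Rinv_0_lt_compat. unfold Rpower; apply exp_pos. }
      nra. }
    apply Rle_trans with (/ r * (Rpower (- IZR z) (- r) - 1 - (Rpower (1 - IZR z) (- r) - 1))).
    + apply Rmult_le_reg_l with r; auto. rewrite <- Rmult_assoc, Rinv_r, Rmult_1_l by lra. lra.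
    + unfold Rdiv. rewrite (Rmult_comm (Rpower 2 s)), Rmult_assoc.
      apply Rmult_le_compat_l; [apply Rlt_le, Rinv_0_lt_compat; auto|]. nra.
  - assert (Hz0 : 0 <= IZR z) by (apply IZR_le; lia).
    destruct (Z_lt_le_dec (z+1) 0) as [H|H]; [lia|].
    assert (K := key_ineq r (1 + IZR z) Hr ltac:(lra)).
    rewrite Hrs, Rpower_Ropp in K. replace (1 + IZR z + 1) with (1 + (IZR z + 1)) in K by ring.
    rewrite Rabs_pos_eq by lra.
    assert (Hcmp : / Rpower (1 + IZR z) s <= Rpower 2 s * / Rpower (1 + (IZR z + 1)) s).
    { assert (P1 : 0 < Rpower (1 + IZR z) s) by (unfold Rpower; apply exp_pos).
      assert (P2 : 0 < Rpower (1 + (IZR z + 1)) s) by (unfold Rpower; apply exp_pos).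
      assert (P3 : Rpower (1 + (IZR z + 1)) s <= Rpower 2 s * Rpower (1 + IZR z) s).
      { rewrite Rpower_mult_distr by lra. apply Rle_Rpower_l; lra. }
      apply Rmult_le_reg_r with (Rpower (1 + (IZR z + 1)) s); auto.
      rewrite Rmult_assoc, Rinv_l, Rmult_1_r by lra.
      apply Rmult_le_reg_l with (Rpower (1 + IZR z) s); auto.
      rewrite <- Rmult_assoc, Rinv_r, Rmult_1_l by lra. lra. }
    eapply Rle_trans; [apply Hcmp|].
    unfold Rdiv. rewrite Rmult_assoc. apply Rmult_le_compat_l; [lra|].
    apply Rmult_le_reg_l with r; auto. rewrite <- Rmult_assoc, Rinv_r, Rmult_1_l by lra. lra.
Qed.

Lemma Wz_pos s z : 0 <= s -> 0 < Wz s z <= 1.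
Proof.
  intros Hs. unfold Wz. assert (H := Rpower_ge1 (1 + Rabs (IZR z)) s).
  assert (0 <= Rabs (IZR z)) by apply Rabs_pos. specialize (H ltac:(lra) Hs). split.
  - apply Rinv_0_lt_compat; lra.
  - apply Rle_trans with (/ 1); [apply Rinv_le_contravar; lra | rewrite Rinv_1; lra].
Qed.

Lemma Wz_le s z : 1 <= s -> Wz s z <= / (1 + Rabs (IZR z)).
Proof.
  intros Hs. unfold Wz. assert (0 <= Rabs (IZR z)) by apply Rabs_pos.
  apply Rinv_le_contravar; [lra|]. apply Rpower_ge_x; lra.
Qed.

Lemma W_sum s N : 1 < s ->
  sum_f_R0 (fun i => Wz s (Z.of_nat i - Z.of_nat N)) (2*N) <= 2 * (Rpower 2 s / (s-1)).
Proof.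
  intros Hs. set (K := Rpower 2 s / (s-1)).
  set (D := fun i => Dz (s-1) (Z.of_nat i - Z.of_nat N)).
  apply Rle_trans with (sum_f_R0 (fun i => K * (D (S i) - D i)) (2*N)).
  - apply sum_le_gen. intros j _. unfold D.
    replace (Z.of_nat (S j) - Z.of_nat N)%Z with ((Z.of_nat j - Z.of_nat N) + 1)%Z by lia.
    apply W_tel; auto.
  - rewrite (sum_eq _ (fun i => (D (S i) - D i) * K)) by (intros; ring). rewrite <- scal_sum, sum_telesc.
    assert (HK : 0 <= K).
    { unfold K, Rdiv. apply Rmult_le_pos; [unfold Rpower; apply Rlt_le, exp_pos | apply Rlt_le, Rinv_0_lt_compat; lra]. }
    assert (B1 := Dz_bound (s-1) (Z.of_nat (S (2*N)) - Z.of_nat N) ltac:(lra)).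
    assert (B2 := Dz_bound (s-1) (Z.of_nat 0 - Z.of_nat N) ltac:(lra)).
    unfold D. nra.
Qed.

Lemma pairC (f g : R -> R) a b lu lv : is_RInt f a b lu -> is_RInt g a b lv ->
  is_RInt (V:=C_R_CompleteNormedModule) (fun x => (f x, g x)) a b (lu,lv).
Proof. intros H1 H2. apply (is_RInt_fct_extend_pair (U:=R_NormedModule) (V:=R_NormedModule)); simpl; auto. Qed.

Lemma Kent_G t n k : 0 < t -> Cmod (Kent t n k) ^2 = Gf t (Rabs (IZR (n-k))).
Proof.
  intros Ht. set (f := Rabs (IZR (n-k))).
  assert (E : forall th, t * phi (vel t n k) th = chi t th + f*th).
  { intros th. unfold phi, vel, chi, f. field. lra. }
  assert (H1 : is_RInt (fun th => cos (t * phi (vel t n k) th)) a0 b0 (Pc t f)).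
  { apply (is_RInt_ext (fun th => cos (chi t th + f*th))). { intros; rewrite E; auto. }
    apply (RInt_correct (V:=R_CompleteNormedModule)). exri. }
  assert (H2 : is_RInt (fun th => - sin (t * phi (vel t n k) th)) a0 b0 (- Ps t f)).
  { apply (is_RInt_ext (fun th => opp (sin (chi t th + f*th)))). { intros; rewrite E; auto. }
    apply (is_RInt_opp (V:=R_NormedModule)).
    apply (RInt_correct (V:=R_CompleteNormedModule)). exri. }
  assert (EK : Kent t n k = (Pc t f, - Ps t f)).
  { unfold Kent. apply (is_RInt_unique (V:=C_R_CompleteNormedModule)).
    unfold expmi. apply pairC; auto. }
  rewrite EK. unfold Cmod; simpl fst; simpl snd. rewrite pow2_sqrt by nra.
  unfold Gf. ring.
Qed.

Lemma sum_scal_l c (a : nat -> R) n : sum_f_R0 (fun j => c * a j) n = c * sum_f_R0 a n.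
Proof. rewrite scal_sum. apply sum_eq. intros; ring. Qed.

Lemma term_bound sg t n k : 1/2 < sg -> 1 <= t ->
  term sg t n k <= 288/t * (Wz (2*sg) n * Wz (2*sg) k)
     + 2/t * Wz (2*sg) n * (Gf t (IZR (n-k)) + Gf t (IZR (-(n-k))))
     + 2/t * Wz (2*sg) k * (Gf t (IZR (n-k)) + Gf t (IZR (-(n-k)))).
Proof.
  intros Hs Ht. unfold term. rewrite Kent_G by lra.
  replace (weight sg n k) with (Wz (2*sg) n * Wz (2*sg) k) by (unfold weight, Wz; rewrite Rinv_mult; reflexivity).
  set (Wn := Wz (2*sg) n). set (Wk := Wz (2*sg) k).
  assert (HWn := Wz_pos (2*sg) n ltac:(lra)). assert (HWk := Wz_pos (2*sg) k ltac:(lra)).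
  fold Wn in HWn. fold Wk in HWk.
  rewrite opp_IZR. set (d := IZR (n-k)).
  assert (G1 := Gf_nonneg t d). assert (G2 := Gf_nonneg t (-d)).
  assert (Hti : 0 < /t) by (apply Rinv_0_lt_compat; lra).
  unfold Rdiv.
  destruct (Rle_or_lt (Rabs d) t) as [Hd|Hd].
  - assert (HG := fd_G t (Rabs d) Ht (conj (Rabs_pos d) Hd)).
    assert (HG' : Gf t (Rabs d) <= 288 * / t).
    { eapply Rle_trans; [apply HG|]. unfold Rdiv. apply Rmult_le_compat_l; [lra|].
      apply Rinv_le_contravar; [lra|]. simpl. nra. }
    assert (0 <= Wn * Wk) by nra.
    assert (Gf t (Rabs d) * (Wn * Wk) <= 288 * / t * (Wn * Wk)) by (apply Rmult_le_compat_r; lra).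
    assert (0 <= 2 * / t * Wn * (Gf t d + Gf t (- d))) by (apply Rmult_le_pos; [nra|lra]).
    assert (0 <= 2 * / t * Wk * (Gf t d + Gf t (- d))) by (apply Rmult_le_pos; [nra|lra]).
    lra.
  - assert (HGa : Gf t (Rabs d) <= Gf t d + Gf t (-d)).
    { destruct (Rcase_abs d); [rewrite Rabs_left by lra|rewrite Rabs_right by lra]; lra. }
    assert (Htri : Rabs d <= Rabs (IZR n) + Rabs (IZR k)).
    { unfold d. rewrite minus_IZR. unfold Rminus. eapply Rle_trans; [apply Rabs_triang|].
      rewrite Rabs_Ropp. lra. }
    assert (HWW : Wn * Wk <= 2 * / t * Wn + 2 * / t * Wk).
    { assert (A1 := Rabs_pos (IZR n)). assert (A2 := Rabs_pos (IZR k)).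
      assert (Hinv : forall z, t/2 <= Rabs (IZR z) -> Wz (2*sg) z <= 2 * / t).
      { intros z Hz. eapply Rle_trans; [apply Wz_le; lra|].
        replace (2 * / t) with (/ (t/2)) by (field; lra).
        apply Rinv_le_contravar; lra. }
      destruct (Rle_or_lt (t/2) (Rabs (IZR n))) as [Hn|Hn].
      - assert (Wn <= 2 * / t) by (apply Hinv; auto). nra.
      - assert (Wk <= 2 * / t) by (apply Hinv; lra). nra. }
    assert (0 <= 288 * / t * (Wn * Wk)) by (apply Rmult_le_pos; nra).
    assert (Gf t (Rabs d) * (Wn * Wk) <= (Gf t d + Gf t (-d)) * (2 * / t * Wn + 2 * / t * Wk)).
    { assert (G3 := Gf_nonneg t (Rabs d)). apply Rmult_le_compat; nra. }
    nra.
Qed.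

Theorem lemma2p2 : forall sigma : R, 1 / 2 < sigma ->
  exists Cst : R, 0 < Cst /\
    forall t : R, 1 <= t -> forall N : nat, box_sum sigma t N <= Cst / t.
Proof.
  intros sg Hsg.
  set (W := 2 * (Rpower 2 (2*sg) / (2*sg - 1))).
  set (B := 2*PI*(PI/3)).
  assert (HW : 0 <= W).
  { unfold W, Rdiv. apply Rmult_le_pos; [lra|]. apply Rmult_le_pos;
    [unfold Rpower; apply Rlt_le, exp_pos | apply Rlt_le, Rinv_0_lt_compat; lra]. }
  assert (HB : 0 < B) by (unfold B; assert (PI_RGT_0 := PI_RGT_0); nra).
  exists (288*W*W + 8*W*B + 1). split; [nra|].
  intros t Ht N. unfold box_sum.
  set (nn := fun i => (Z.of_nat i - Z.of_nat N)%Z).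
  set (Wi := fun i => Wz (2*sg) (nn i)).
  set (G := fun i j => Gf t (IZR (nn i - nn j)) + Gf t (IZR (-(nn i - nn j)))).
  assert (HWs : sum_f_R0 Wi (2*N) <= W) by (apply W_sum; lra).
  assert (HWi : forall i, 0 < Wi i <= 1) by (intros; apply Wz_pos; lra).
  assert (Hti : 0 < /t) by (apply Rinv_0_lt_compat; lra).
  assert (HGr : forall i, (i <= 2*N)%nat -> sum_f_R0 (fun j => G i j) (2*N) <= 2*B).
  { intros i _. unfold G. rewrite sum_plus.
    assert (sum_f_R0 (fun j => Gf t (IZR (nn i - nn j))) (2*N) <= B).
    { apply (bessel t (fun j => (nn i - nn j)%Z)). intros; unfold nn; lia. }
    assert (sum_f_R0 (fun j => Gf t (IZR (-(nn i - nn j)))) (2*N) <= B).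
    { apply (bessel t (fun j => (-(nn i - nn j))%Z)). intros; unfold nn; lia. }
    lra. }
  assert (HGc : forall j, (j <= 2*N)%nat -> sum_f_R0 (fun i => G i j) (2*N) <= 2*B).
  { intros j _. unfold G. rewrite sum_plus.
    assert (sum_f_R0 (fun i => Gf t (IZR (nn i - nn j))) (2*N) <= B).
    { apply (bessel t (fun i => (nn i - nn j)%Z)). intros; unfold nn; lia. }
    assert (sum_f_R0 (fun i => Gf t (IZR (-(nn i - nn j)))) (2*N) <= B).
    { apply (bessel t (fun i => (-(nn i - nn j))%Z)). intros; unfold nn; lia. }
    lra. }
  assert (HG0 : forall i j, 0 <= G i j) by (intros; unfold G; assert (H1 := Gf_nonneg t (IZR (nn i - nn j))); assert (H2 := Gf_nonneg t (IZR (- (nn i - nn j)))); lra).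
  apply Rle_trans with (sum_f_R0 (fun i => sum_f_R0 (fun j =>
      288/t * (Wi i * Wi j) + 2/t * Wi i * G i j + 2/t * Wi j * G i j) (2*N)) (2*N)).
  { apply sum_le_gen; intros i _; apply sum_le_gen; intros j _.
    apply term_bound; lra. }
  rewrite (sum_eq _ (fun i => 288/t * Wi i * sum_f_R0 Wi (2*N)
          + 2/t * Wi i * sum_f_R0 (fun j => G i j) (2*N)
          + sum_f_R0 (fun j => 2/t * Wi j * G i j) (2*N))).
  2:{ intros i _. rewrite !sum_plus. f_equal. f_equal.
      - rewrite <- sum_scal_l. apply sum_eq; intros; ring.
      - rewrite <- sum_scal_l. apply sum_eq; intros; ring. }
  rewrite !sum_plus, sum_exch.
  assert (S1 : sum_f_R0 (fun i => 288/t * Wi i * sum_f_R0 Wi (2*N)) (2*N) <= 288/t*W*W).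
  { rewrite (sum_eq _ (fun i => (288/t * sum_f_R0 Wi (2*N)) * Wi i)) by (intros; ring).
    rewrite sum_scal_l. assert (0 <= sum_f_R0 Wi (2*N)) by (apply sum_nonneg; intros; specialize (HWi j); lra).
    assert (0 <= 288 / t) by (unfold Rdiv; lra).
    rewrite !Rmult_assoc. apply Rmult_le_compat_l; [auto|]. nra. }
  assert (S2 : sum_f_R0 (fun i => 2/t * Wi i * sum_f_R0 (fun j => G i j) (2*N)) (2*N) <= 2/t*W*(2*B)).
  { apply Rle_trans with (sum_f_R0 (fun i => (2/t * (2*B)) * Wi i) (2*N)).
    - apply sum_le_gen; intros i Hi. specialize (HGr i Hi). specialize (HWi i).
      assert (0 <= 2/t * Wi i) by (unfold Rdiv; nra).
      replace (2 / t * (2 * B) * Wi i) with ((2/t * Wi i) * (2*B)) by ring.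
      apply Rmult_le_compat_l; auto.
    - rewrite sum_scal_l. replace (2/t*W*(2*B)) with ((2/t*(2*B)) * W) by ring.
      apply Rmult_le_compat_l; auto. unfold Rdiv; nra. }
  assert (S3 : sum_f_R0 (fun j => sum_f_R0 (fun i => 2/t * Wi j * G i j) (2*N)) (2*N) <= 2/t*W*(2*B)).
  { apply Rle_trans with (sum_f_R0 (fun j => (2/t * (2*B)) * Wi j) (2*N)).
    - apply sum_le_gen; intros j Hj. specialize (HGc j Hj). specialize (HWi j).
      rewrite sum_scal_l.
      assert (0 <= 2/t * Wi j) by (unfold Rdiv; nra).
      replace (2 / t * (2 * B) * Wi j) with ((2/t * Wi j) * (2*B)) by ring.
      apply Rmult_le_compat_l; auto.
    - rewrite sum_scal_l. replace (2/t*W*(2*B)) with ((2/t*(2*B)) * W) by ring.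
      apply Rmult_le_compat_l; auto. unfold Rdiv; nra. }
  replace ((288*W*W + 8*W*B + 1)/t) with (288/t*W*W + 2/t*W*(2*B) + 2/t*W*(2*B) + /t) by (field; lra).
  lra.
Qed.
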